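(* Let $r>0$ be a fixed real number. If $P$ is a finite poset having an interval representation in which every interval is closed and has length $0$ or $r$, then $\dim(P) \le 3$.
   Context: Posets are finite and reflexive. An interval representation of a poset $P$ assigns to each element $x$ a closed bounded interval $[\ell(x), r(x)]$ (possibly degenerate, of length $0$) such that for distinct $x,y$, $x<y$ in $P$ if and only if $r(x)<\ell(y)$. The dimension $\dim(P)$ is the minimum number of linear extensions of $P$ whose intersection is $P$. *)

(* Defs.v *)
From HB Require Import structures.
From mathcomp Require Import all_boot all_order all_algebra.
From mathcomp Require Import reals.
Set Implicit Arguments. Unset Strict Implicit. Unset Printing Implicit Defensive.
Import Order.TTheory GRing.Theory Num.Theory.
Local Open Scope ring_scope.

Definition linear_extension (d : Order.disp_t) (P : finPOrderType d)
  (L : rel P) : Prop :=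
  [/\ reflexive L, antisymmetric L, transitive L,
      total L & forall x y : P, (x <= y)%O -> L x y].

Definition realizer (d : Order.disp_t) (P : finPOrderType d) (t : nat)
  (L : 'I_t -> rel P) : Prop :=
  (forall i, linear_extension (L i)) /\
  (forall x y : P, (x <= y)%O = [forall i, L i x y]).

Definition dim_le (d : Order.disp_t) (P : finPOrderType d) (k : nat) : Prop :=
  exists t : nat, (t <= k)%N /\ exists L : 'I_t -> rel P, realizer L.

Definition interval_rep (R : realType) (d : Order.disp_t) (P : finPOrderType d)
  (lft rgt : P -> R) : Prop :=
  (forall x, lft x <= rgt x) /\
  (forall x y : P, x != y -> ((x < y)%O <-> rgt x < lft y)).

(* Main.v *)
Require Import Defs.
From HB Require Import structures.
From mathcomp Require Import all_boot all_order all_algebra.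
From mathcomp Require Import reals.
From mathcomp Require Import zify ring lra.
Import Order.TTheory GRing.Theory Num.Theory.
Set Implicit Arguments. Unset Strict Implicit. Unset Printing Implicit Defensive.
Local Open Scope ring_scope.

Definition lexrel (R : realType) (T : finType) (f : T -> R) (c : T -> nat)
  (rev : bool) : rel T :=
  fun x y => (f x < f y) || ((f x == f y) && ((c x < c y)%N || ((c x == c y) &&
     (if rev then (enum_rank y <= enum_rank x)%N else (enum_rank x <= enum_rank y)%N)))).

Section Lex.
Variables (R : realType) (T : finType) (f : T -> R) (c : T -> nat) (rev : bool).
Let L := lexrel f c rev.
Let rk (x : T) : nat := enum_rank x.

Lemma lex_refl : reflexive L.
Proof. by move=> x; rewrite /L /lexrel !eqxx ltnn /=; case: rev; rewrite leqnn orbT. Qed.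

Lemma rk_inj x y : rk x = rk y -> x = y.
Proof. by move=> h; apply: enum_rank_inj; apply: val_inj. Qed.

Lemma lex_anti : antisymmetric L.
Proof.
move=> x y /andP[]; rewrite /L /lexrel.
case: (ltgtP (f x) (f y)) => //= _.
case: (ltngtP (c x) (c y)) => //= _.
case: rev => h1 h2; apply: rk_inj; apply/eqP; rewrite eqn_leq; apply/andP; split => //.
Qed.

Lemma lex_trans : transitive L.
Proof.
move=> y x z; rewrite /L /lexrel.
case: (ltgtP (f x) (f y)) => //= [hxy _|exy h1].
  case: (ltgtP (f y) (f z)) => //= [hyz _|eyz _].
    by rewrite (lt_trans hxy hyz).
  by rewrite -eyz hxy.
rewrite exy.
case: (ltgtP (f y) (f z)) => //= eyz h2.
move=> /=.
move: h1; rewrite -/(is_true _).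
case: (ltngtP (c x) (c y)) => //= [cxy _|cxy h1].
  move: h2; case: (ltngtP (c y) (c z)) => //= [cyz _|cyz _].
    by rewrite (ltn_trans cxy cyz).
  by rewrite -cyz cxy.
rewrite cxy; move: h2.
case: (ltngtP (c y) (c z)) => //= cyz h2.
move: h2 => /=  h2.
by case: rev h1 h2 => h1 h2; [apply: leq_trans h2 h1 | apply: leq_trans h1 h2].
Qed.

Lemma lex_total : total L.
Proof.
move=> x y; rewrite /L /lexrel.
case: (ltgtP (f x) (f y)) => //= _.
case: (ltngtP (c x) (c y)) => //= _.
by case: rev; apply: leq_total.
Qed.

Lemma lex_lt x y : f x < f y -> L x y.
Proof. by rewrite /L /lexrel => ->. Qed.

Lemma lex_notf x y : f y < f x -> ~~ L x y.
Proof.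
move=> h; by rewrite /L /lexrel (lt_gtF h) (gt_eqF h).
Qed.

Lemma lex_notc x y : f x = f y -> (c y < c x)%N -> ~~ L x y.
Proof.
move=> e h; rewrite /L /lexrel e ltxx eqxx /=.
by rewrite negb_or negb_and ltnNge (ltnW h) /= neq_ltn h orbT.
Qed.

Lemma lex_notr x y : f x = f y -> c x = c y ->
  (if rev then (rk x < rk y)%N else (rk y < rk x)%N) -> ~~ L x y.
Proof.
move=> e e2 h; rewrite /L /lexrel e ltxx eqxx e2 ltnn eqxx /=.
by rewrite /rk in h; case: rev h; rewrite -ltnNge.
Qed.

End Lex.

Lemma par_choice (k : int) (b : int) : (b = 0 \/ b = 1) ->
  exists s : int, (s = 0 \/ s = 1) /\ ((k + s) %% 2)%Z = b.
Proof.
move=> hb.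
case: (boolP (((k + 0) %% 2)%Z == b)) => [/eqP p|/eqP p].
  by exists 0; split => //; left.
by exists 1; split; [right | lia].
Qed.

Lemma par_next (k s : int) : ((k + s) %% 2)%Z = 0 -> ((k + 1 + s) %% 2)%Z = 1.
Proof. lia. Qed.

Lemma B_next (k s : int) : ((k + s) %% 2)%Z = 0 ->
  k + s - ((k + s) %% 2)%Z = k + 1 + s - ((k + 1 + s) %% 2)%Z.
Proof. lia. Qed.

Lemma B_cases (k1 k2 s : int) : k1 <= k2 ->
  (k1 + s - ((k1 + s) %% 2)%Z + 2 <= k2 + s - ((k2 + s) %% 2)%Z) \/
  (k1 + s - ((k1 + s) %% 2)%Z = k2 + s - ((k2 + s) %% 2)%Z /\ k1 = k2) \/
  (k1 + s - ((k1 + s) %% 2)%Z = k2 + s - ((k2 + s) %% 2)%Z /\ k2 = k1 + 1 /\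
   ((k1 + s) %% 2)%Z = 0 /\ ((k2 + s) %% 2)%Z = 1).
Proof. lia. Qed.

Section Core.
Variables (R : realType) (T : finType) (u : T -> R) (t : T -> bool).

Definition kf x : int := Num.floor (u x).
Definition ph x : R := u x - (kf x)%:~R.
Definition tR x : R := (t x)%:R.

Lemma ph_ge0 x : 0 <= ph x.
Proof. by rewrite /ph subr_ge0 /kf floor_le. Qed.

Lemma ph_lt1 x : ph x < 1.
Proof. have := floorD1_gt (u x); rewrite intrD /ph /kf => h; lra. Qed.

Lemma uE x : u x = (kf x)%:~R + ph x.
Proof. by rewrite /ph addrC subrK. Qed.

Lemma tR01 x : tR x = if t x then 1 else 0.
Proof. by rewrite /tR; case: (t x). Qed.

Lemma int_lt (a b : int) : (a%:~R : R) < b%:~R -> a < b.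
Proof. by rewrite ltr_int. Qed.

Lemma int_le (a b : int) : (a%:~R : R) <= b%:~R -> a <= b.
Proof. by rewrite ler_int. Qed.

Lemma comp_k x y : u x + tR x < u y ->
  [/\ kf x <= kf y, (t x -> kf x + 1 <= kf y),
      (kf x = kf y -> ~~ t x /\ ph x < ph y) &
      (kf y = kf x + 1 -> t x -> ph x < ph y)].
Proof.
move=> h.
have hx := ph_ge0 x; have hx1 := ph_lt1 x; have hy := ph_ge0 y; have hy1 := ph_lt1 y.
rewrite (uE x) (uE y) tR01 in h.
have a1 : kf x <= kf y.
  have : kf x < kf y + 1.
    apply: int_lt; rewrite intrD.
    by case: (t x) h => h; lra.
  lia.
split => //.
- move=> tx; rewrite tx in h.
  have : kf x < kf y.
    apply: int_lt; lra.
  lia.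
- move=> e; rewrite e in h.
  by case: (t x) h => h; split => //; lra.
- by move=> e tx; rewrite e intrD tx in h; lra.
Qed.

Lemma inc_k x y : u y <= u x + tR x -> u x <= u y + tR y ->
  [/\ kf y <= kf x + 1, kf x <= kf y + 1,
      (kf y = kf x + 1 -> t x /\ ph y <= ph x) &
      (kf x = kf y -> ~~ t x -> ph y <= ph x)].
Proof.
move=> h1 h2.
have hx := ph_ge0 x; have hx1 := ph_lt1 x; have hy := ph_ge0 y; have hy1 := ph_lt1 y.
rewrite (uE x) (uE y) !tR01 in h1 h2.
split.
- have : kf y < kf x + 2.
    apply: int_lt; rewrite intrD.
    by case: (t x) h1 => h1; lra.
  lia.
- have : kf x < kf y + 2.
    apply: int_lt; rewrite intrD.
    by case: (t y) h2 => h2; lra.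
  lia.
- move=> e; rewrite e intrD in h1.
  by case: (t x) h1 => h1; split => //; lra.
- by move=> e tx; rewrite e (negbTE tx) in h1; lra.
Qed.

End Core.

Section Core2.
Variables (R : realType) (T : finType) (u : T -> R) (t : T -> bool).
Local Notation kf := (kf u).
Local Notation ph := (ph u).
Local Notation tR := (@tR R T t).

Definition par (s : int) x : int := ((kf x + s) %% 2)%Z.
Definition Bs s x : int := kf x + s - par s x.
Definition fs s x : R := 4 * (Bs s x)%:~R +
  (if (par s x == 0) && ~~ t x then ph x else 2 + ph x).
Definition cs s x : nat := if par s x == 0 then 2%N else if t x then 0%N else 1%N.
Definition f3 x : R := 4 * (kf x)%:~R + (if t x then 3 - ph x else ph x).
Definition Lrel (i : 'I_3) : rel T :=
  if val i == 0%N then lexrel (fs 0) (cs 0) false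
  else if val i == 1%N then lexrel (fs 1) (cs 1) false
  else lexrel f3 (fun _ => 0%N) true.

Lemma fs_comp s x y : u x + tR x < u y -> fs s x < fs s y.
Proof.
move=> h; have [a1 a2 a3 a4] := comp_k h.
have hx := ph_ge0 u x; have hx1 := ph_lt1 u x.
have hy := ph_ge0 u y; have hy1 := ph_lt1 u y.
have : (Bs s x + 2 <= Bs s y) \/ (Bs s x = Bs s y /\ kf x = kf y) \/
   (Bs s x = Bs s y /\ kf y = kf x + 1 /\ par s x = 0 /\ par s y = 1).
  by rewrite /Bs /par; apply: B_cases.
case => [hB|[[eB ek]|[eB [ek [px py]]]]].
- have : ((Bs s x + 2)%:~R : R) <= (Bs s y)%:~R by rewrite ler_int.
  rewrite intrD /fs => hB'.
  by case: ifP => _; case: ifP => _; lra.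
- have [nt lt] := a3 ek; move/negbTE: nt => nt.
  rewrite /fs eB /par ek nt.
  by case: (_ == 0); case: (t y) => /=; lra.
- rewrite /fs eB px py /=.
  case tx: (t x) => /=.
    by have := a4 ek tx; lra.
  lra.
Qed.

Lemma f3_comp x y : u x + tR x < u y -> f3 x < f3 y.
Proof.
move=> h; have [a1 a2 a3 a4] := comp_k h.
have hx := ph_ge0 u x; have hx1 := ph_lt1 u x.
have hy := ph_ge0 u y; have hy1 := ph_lt1 u y.
have [lt|ek] : kf x + 1 <= kf y \/ kf x = kf y.
  by move: a1; clear; lia.
- have : ((kf x + 1)%:~R : R) <= (kf y)%:~R by rewrite ler_int.
  rewrite intrD /f3 => h'.
  by case: (t x); case: (t y); lra.
- have [nt lt] := a3 ek; move/negbTE: nt => nt.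
  rewrite /f3 ek nt.
  by case: (t y); lra.
Qed.

Lemma Lrel_comp i x y : u x + tR x < u y -> Lrel i x y.
Proof.
move=> h; rewrite /Lrel.
case: ifP => _; first exact/lex_lt/fs_comp.
case: ifP => _; first exact/lex_lt/fs_comp.
exact/lex_lt/f3_comp.
Qed.

Lemma Lrel_lin i : [/\ reflexive (Lrel i), antisymmetric (Lrel i),
   transitive (Lrel i) & total (Lrel i)].
Proof.
rewrite /Lrel; case: ifP => _; last case: ifP => _;
by split; [apply: lex_refl | apply: lex_anti | apply: lex_trans | apply: lex_total].
Qed.

Definition i0 : 'I_3 := @Ordinal 3 0 isT.
Definition i1 : 'I_3 := @Ordinal 3 1 isT.
Definition i2 : 'I_3 := @Ordinal 3 2 isT.

Lemma Lrel_s s x y : (s = 0 \/ s = 1) ->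
  ~~ lexrel (fs s) (cs s) false x y -> exists i, ~~ Lrel i x y.
Proof. by case=> ->; [exists i0 | exists i1]. Qed.

Lemma eqkeys x y : x != y -> kf x = kf y -> t x = t y -> ph x = ph y ->
  exists i, ~~ Lrel i x y.
Proof.
move=> nxy ek et eph.
have ne : (enum_rank x : nat) != enum_rank y.
  apply: contra nxy => /eqP e; apply/eqP; apply: enum_rank_inj; exact: val_inj.
case: (ltngtP (enum_rank x) (enum_rank y)) => [lt|gt|e]; last by rewrite e eqxx in ne.
- exists i2; rewrite /Lrel /=; apply: lex_notr => //.
  by rewrite /f3 ek et eph.
- exists i0; rewrite /Lrel /=; apply: lex_notr => //.
  + by rewrite /fs /Bs /par ek et eph.
  + by rewrite /cs /par ek et.
Qed.

Lemma inc_exists x y : x != y -> u y <= u x + tR x -> u x <= u y + tR y ->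
  exists i, ~~ Lrel i x y.
Proof.
move=> nxy h1 h2.
have [b1 b2 b3 b4] := inc_k h1 h2.
have [c1 c2 c3 c4] := inc_k h2 h1.
have hx := ph_ge0 u x; have hx1 := ph_lt1 u x.
have hy := ph_ge0 u y; have hy1 := ph_lt1 u y.
have [ek|[ek|ek]] : kf y = kf x + 1 \/ kf x = kf y + 1 \/ kf x = kf y.
  by move: b1 c1; clear; lia.
-
  have [tx le] := b3 ek.
  have [s [s01 ps]] : exists s, (s = 0 \/ s = 1) /\ par s x = 0.
    by apply: par_choice; left.
  apply: (Lrel_s s01).
  have py : par s y = 1 by rewrite /par ek; apply: par_next.
  have eB : Bs s x = Bs s y by rewrite /Bs /par ek; apply: B_next.
  have [lt|eq] : ph y < ph x \/ ph y = ph x by lra.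
  + apply: lex_notf; rewrite /fs eB ps py tx /=; lra.
  + apply: lex_notc; first by rewrite /fs eB ps py tx eq.
    by rewrite /cs ps py /=; case: (t y).
-
  exists i2; rewrite /Lrel /=; apply: lex_notf.
  have : ((kf y + 1)%:~R : R) <= (kf x)%:~R by rewrite ler_int ek.
  rewrite intrD /f3 => h'.
  by case: (t x); case: (t y); lra.
- case tx: (t x); case ty: (t y).
  + have [lt|[gt|eq]] : ph y < ph x \/ ph x < ph y \/ ph x = ph y by lra.
    * exists i0; rewrite /Lrel /=; apply: lex_notf.
      by rewrite /fs /Bs /par ek tx ty andbF /=; lra.
    * exists i2; rewrite /Lrel /=; apply: lex_notf.
      by rewrite /f3 ek tx ty; lra.
    * by apply: eqkeys => //; rewrite tx ty.
  + exists i2; rewrite /Lrel /=; apply: lex_notf.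
    by rewrite /f3 ek tx ty; lra.
  + have le : ph y <= ph x by apply: b4 => //; rewrite tx.
    have [s [s01 ps]] : exists s, (s = 0 \/ s = 1) /\ par s x = 1.
      by apply: par_choice; right.
    apply: (Lrel_s s01).
    have py : par s y = 1 by rewrite /par -ek.
    have eB : Bs s x = Bs s y by rewrite /Bs ps py ek.
    have [lt|eq] : ph y < ph x \/ ph y = ph x by lra.
    * apply: lex_notf; rewrite /fs eB ps py tx ty /=; lra.
    * apply: lex_notc; first by rewrite /fs eB ps py tx ty eq.
      by rewrite /cs ps py tx ty.
  + have le1 : ph y <= ph x by apply: b4 => //; rewrite tx.
    have le2 : ph x <= ph y by apply: c4 => //; rewrite ty.
    by apply: eqkeys => //; [rewrite tx ty | lra].
Qed.

End Core2.

Theorem mainTheorem7 (R : realType) (r : R) (hr : 0 < r)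
  (d : Order.disp_t) (P : finPOrderType d) (lft rgt : P -> R) :
  interval_rep lft rgt ->
  (forall x : P, rgt x - lft x = 0 \/ rgt x - lft x = r) ->
  dim_le P 3.
Proof.
move=> [hle hrep] hlen.
pose u x := lft x / r.
pose t x := rgt x != lft x.
have rne : r != 0 by rewrite gt_eqF.
have key : forall x y : P, (rgt x < lft y) = (u x + @tR R P t x < u y).
  move=> x y.
  have -> : u x + @tR R P t x = rgt x / r.
    rewrite /u /tR /t; case: (hlen x) => e.
      have E : rgt x = lft x by lra.
      by rewrite E eqxx /= addr0.
    have E : rgt x = lft x + r by lra.
    have -> : (rgt x != lft x) = true by apply/eqP; lra.
    by rewrite E /=; field.
  by rewrite ltr_pM2r ?invr_gt0.
have leL : forall (i : 'I_3) (x y : P), (x <= y)%O -> Lrel u t i x y.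
  move=> i x y; rewrite le_eqVlt => /orP [/eqP->|lt].
    by have [h1 _ _ _] := Lrel_lin u t i; apply: h1.
  apply: Lrel_comp; rewrite -key; apply/(hrep x y _).1 => //.
  by rewrite lt_eqF.
exists 3; split => //; exists (Lrel u t); split.
  move=> i; have [h1 h2 h3 h4] := Lrel_lin u t i; split => //.
  exact: leL.
move=> x y; apply/idP/forallP; first by move=> hxy i; apply: leL.
move=> H; case: (eqVneq x y) => [->|nxy]; first exact: le_refl.
case h: (rgt x < lft y).
  by rewrite le_eqVlt; apply/orP; right; apply/(hrep x y nxy).2.
exfalso.
case h': (rgt y < lft x).
  have [_ h2 _ _] := Lrel_lin u t i0.
  have hyx : Lrel u t i0 y x by apply: Lrel_comp; rewrite -key.
  have : x = y by apply: h2; rewrite H hyx.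
  by move/eqP; rewrite (negbTE nxy).
rewrite key in h; rewrite key in h'.
have a1 : u y <= u x + @tR R P t x by rewrite leNgt h.
have a2 : u x <= u y + @tR R P t y by rewrite leNgt h'.
have [i ni] := inc_exists nxy a1 a2.
by move: (H i); rewrite (negbTE ni).
Qed.
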